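(* For every set $X=\{X^1,\dots,X^m\}\subseteq S_n$ of $m\ge1$ distinct elements, $$\Big|\bigcap_{i=1}^m\mathrm{Elim}(\{X^i\})\Big|=3^{z_X}\Big(-(-2)^{m-1}+\sum_{\alpha\in S_m}(-1)^{z(\alpha)}\,2^{\,z(\alpha)+|\mathrm{BSp}(X,\alpha)|}\Big).$$
   Context: $S_n$ is the set of all nonzero $n$-tuples in $\{-1,0,1\}^n$ whose first nonzero entry equals $1$. A tuple $t=(t_1,\dots,t_n)\in\{1,0,-1,u\}^n$ ($u$ a formal symbol) eliminates $s\in S_n$ if: (i) $t_i\neq0$ and $s_i\neq0$ for some $i$; (ii) there is $k\in\{+1,-1\}$ with $t_i=ks_i$ for all $i$ with $s_i\neq0$ and $t_i\neq0$; (iii) $s_i=0$ whenever $t_i=u$. For $X\subseteq S_n$, $\mathrm{Elim}(X)$ is the set of elements of $S_n$ eliminated by at least one element of $X$. $M_X$ is the $m\times n$ matrix whose $i$-th row is $X^i$; $z_X$ is the number of zero columns of $M_X$. For a tuple $\alpha$, $z(\alpha)$ is the number of its zero coordinates. For $\alpha\in S_m$, $\mathrm{BSp}(X,\alpha)$ is the set of indices $c\in\{1,\dots,n\}$ such that the $c$-th column of $M_X$ is nonzero and equals $\pm(a_1\alpha_1,\dots,a_m\alpha_m)^T$ for some $(a_1,\dots,a_m)\in\{0,1\}^m\setminus\{(0,\dots,0)\}$. *)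

(* Defs.v *)
From HB Require Import structures.
From mathcomp Require Import all_boot all_order all_algebra.
Set Implicit Arguments. Unset Strict Implicit. Unset Printing Implicit Defensive.
Import GRing.Theory Num.Theory.
Local Open Scope ring_scope.

(* Entries of {-1,0,1} are encoded by 'I_3 : 0 |-> 0, 1 |-> 1, 2 |-> -1. *)
Definition ent (x : 'I_3) : int :=
  if val x == 0%N then 0 else if val x == 1%N then 1 else -1.

Definition vec (n : nat) := {ffun 'I_n -> 'I_3}.

Definition coord n (s : vec n) (i : 'I_n) : int := ent (s i).

Definition Sn (n : nat) : {set vec n} :=
  [set s : vec n | [exists i, coord s i != 0] &&
     [exists i : 'I_n, [&& coord s i == 1 &
        [forall j : 'I_n, (j < i)%N ==> (coord s j == 0)]]]].

(* Tuples in {1,0,-1,u}^n: None stands for the formal symbol u. *)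
Definition eliminates n (t : 'I_n -> option int) (s : vec n) : bool :=
  [&& [exists i, (t i != Some 0) && (coord s i != 0)],
      [exists k : bool, forall i,
         ((coord s i != 0) && (t i != Some 0)) ==>
           (t i == Some ((-1) ^+ k * coord s i))] &
      [forall i, (t i == None) ==> (coord s i == 0)]].

Definition toE n (x : vec n) : 'I_n -> option int := fun i => Some (coord x i).

Definition Elim n (X : {set vec n}) : {set vec n} :=
  [set s in Sn n | [exists x in X, eliminates (toE x) s]].

(* M_X has rows X i; its (i,c) entry is coord (X i) c. *)
Definition zX m n (X : 'I_m -> vec n) : nat :=
  #|[set c : 'I_n | [forall i, coord (X i) c == 0]]|.

Definition zcnt m (a : vec m) : nat := #|[set i : 'I_m | coord a i == 0]|.

Definition BSp m n (X : 'I_m -> vec n) (al : vec m) : {set 'I_n} :=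
  [set c : 'I_n | [exists i, coord (X i) c != 0] &&
     [exists a : {ffun 'I_m -> bool}, [exists i, a i] &&
        [exists k : bool, forall i,
           coord (X i) c == (-1) ^+ k * ((nat_of_bool (a i))%:R * coord al i)]]].

(* Main.v *)
Require Import Defs.
From HB Require Import structures.
From mathcomp Require Import all_boot all_order all_algebra.
From mathcomp Require Import ring zify.
Require Import Defs.
Import GRing.Theory Num.Theory.
Local Open Scope ring_scope.
Set Implicit Arguments. Unset Strict Implicit.

Lemma ent_cases (x : 'I_3) : [\/ ent x = 0, ent x = 1 | ent x = -1].
Proof. by case: x => [[|[|[|k]]] Hk] //=; [constructor 1|constructor 2|constructor 3]. Qed.

Lemma ent_eq0 (x : 'I_3) : (ent x == 0) = (val x == 0%N).
Proof. by case: x => [[|[|[|k]]] Hk]. Qed.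

Definition negI3 (x : 'I_3) : 'I_3 :=
  if val x == 0%N then x else if val x == 1%N then inord 2 else inord 1.

Lemma ent_neg x : ent (negI3 x) = - ent x.
Proof. by case: x => [[|[|[|k]]] Hk] //; rewrite /negI3 /ent /= inordK. Qed.

Lemma negI3K : involutive negI3.
Proof.
move=> x; apply/val_inj; case: x => [[|[|[|k]]] Hk] //; rewrite /negI3 /= ?inordK //= ?inordK.
Qed.

Definition negv p (s : vec p) : vec p := [ffun i => negI3 (s i)].

Lemma coord_neg p (s : vec p) i : coord (negv s) i = - coord s i.
Proof. by rewrite /coord /negv ffunE ent_neg. Qed.

Lemma negvK p : involutive (@negv p).
Proof. by move=> s; apply/ffunP => i; rewrite !ffunE negI3K. Qed.

Lemma sumI3 (F : 'I_3 -> int) : \sum_b F b = F ord0 + F (inord 1) + F (inord 2).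
Proof.
rewrite !big_ord_recl big_ord0 addr0 addrA; congr (F _ + F _ + F _);
 by apply/val_inj; rewrite /= inordK.
Qed.

Lemma ent1 : ent (inord 1 : 'I_3) = 1. Proof. by rewrite /ent /= inordK. Qed.
Lemma ent2 : ent (inord 2 : 'I_3) = -1. Proof. by rewrite /ent /= inordK. Qed.
Lemma ent0 : ent (ord0 : 'I_3) = 0. Proof. by []. Qed.

Definition nz p (s : vec p) := [exists i, coord s i != 0].
Definition zerov p : vec p := [ffun _ => ord0].

Lemma nzE p (s : vec p) : nz s = (s != zerov p).
Proof.
case: (boolP (nz s)) => [/existsP [i Hi]|/existsPn H].
  by apply/esym/eqP => Hs; rewrite Hs /coord ffunE in Hi.
apply/esym/negbF/eqP/ffunP => i; rewrite ffunE; apply/val_inj => /=.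
by have := H i; rewrite negbK /coord ent_eq0 => /eqP.
Qed.

Lemma Sn_nz p (s : vec p) : s \in Sn p -> nz s.
Proof. by rewrite inE => /andP []. Qed.

Lemma nz_neg p (s : vec p) : nz (negv s) = nz s.
Proof.
apply/existsP/existsP => [[i Hi]|[i Hi]]; exists i; move: Hi; by rewrite coord_neg oppr_eq0.
Qed.

Lemma first_nz p (s : vec p) : nz s ->
  exists i0, coord s i0 != 0 /\ forall j : 'I_p, (j < i0)%N -> coord s j = 0.
Proof.
move/existsP=> [i1 Hi1].
case: (@arg_minnP _ i1 (fun i => coord s i != 0) val Hi1) => i0 Hi0 Hmin.
exists i0; split => // j Hj; apply/eqP; apply/negPn/negP => Hnz.
by have := Hmin j Hnz; rewrite leqNgt Hj.
Qed.

Lemma Sn_first p (s : vec p) i0 : coord s i0 != 0 ->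
  (forall j : 'I_p, (j < i0)%N -> coord s j = 0) -> (s \in Sn p) = (coord s i0 == 1).
Proof.
move=> Hnz Hlt; rewrite inE; apply/andP/eqP.
  case=> _ /existsP [i /andP [/eqP Hi /forallP Hj]].
  case: (ltngtP i i0) => H.
  - by have := Hlt i H; rewrite Hi.
  - by have := Hj i0; rewrite H /= => /eqP h; rewrite h eqxx in Hnz.
  - by have -> : i0 = i by apply/val_inj.
move=> H; split; first by apply/existsP; exists i0.
apply/existsP; exists i0; rewrite H eqxx /=; apply/forallP => j; apply/implyP => hj.
by rewrite Hlt.
Qed.

Lemma Sn_neg p (s : vec p) : nz s -> (negv s \in Sn p) = ~~ (s \in Sn p).
Proof.
move=> /first_nz [i0 [Hnz Hlt]].
rewrite (Sn_first Hnz Hlt) (@Sn_first _ (negv s) i0); last first.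
- by move=> j Hj; rewrite coord_neg Hlt // oppr0.
- by rewrite coord_neg oppr_eq0.
rewrite coord_neg; move: Hnz; rewrite /coord; by case: (ent_cases (s i0)) => ->.
Qed.

Lemma halve p (h : vec p -> int) : (forall s, h (negv s) = h s) ->
  \sum_(s : vec p) h s = h (zerov p) + 2 * \sum_(s in Sn p) h s.
Proof.
move=> Hh; rewrite (bigD1 (zerov p)) //=; congr (_ + _).
rewrite (bigID (fun s => s \in Sn p)) /=.
have E1 : \sum_(s | (s != zerov p) && (s \in Sn p)) h s = \sum_(s in Sn p) h s.
  apply: eq_bigl => s; case: (boolP (s \in Sn p)) => H; rewrite ?andbT ?andbF //.
  by rewrite -nzE; apply: Sn_nz.
have E2 : \sum_(s | (s != zerov p) && (s \notin Sn p)) h s = \sum_(s in Sn p) h s.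
  rewrite (reindex_inj (inv_inj (@negvK p))); apply: eq_big => s; last by rewrite Hh.
  rewrite -!nzE nz_neg; case: (boolP (nz s)) => Hn /=; first by rewrite Sn_neg // negbK.
  by apply/esym/negP => /Sn_nz; rewrite (negbTE Hn).
by rewrite E1 E2; ring.
Qed.

Lemma prod_ind (I : finType) (P : pred I) :
  \prod_i (((P i) : nat)%:R : int) = (([forall i, P i]) : nat)%:R.
Proof.
case: (boolP [forall i, P i]) => [/forallP H|/forallPn [i Hi]].
  by apply: big1 => i _; rewrite H.
by rewrite (bigD1 i) //= (negbTE Hi) mul0r.
Qed.

Lemma prod_if (I : finType) (A : {set I}) (x : int) :
  \prod_i (if i \in A then x else 1) = x ^+ #|A|.
Proof. by rewrite -big_mkcond /= prodr_const. Qed.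

Lemma prod_zcnt p (al : vec p) :
  \prod_i (if ent (al i) == 0 then -2 else 1 : int) = (-2) ^+ zcnt al.
Proof. by rewrite /zcnt -prod_if; apply: eq_bigr => i _; rewrite inE. Qed.

Lemma eqSome (a b : int) : (Some a == Some b) = (a == b).
Proof. by apply/eqP/eqP => [[]|->]. Qed.

Definition meet n (x s : vec n) := [exists c, (coord x c != 0) && (coord s c != 0)].
Definition compat n (x s : vec n) (e : int) :=
  [forall c, ((coord s c != 0) && (coord x c != 0)) ==> (coord x c == e * coord s c)].
Definition g n (x s : vec n) (b : 'I_3) : int :=
  if ent b == 0 then -2 * ((~~ meet x s) : nat)%:R else ((compat x s (ent b)) : nat)%:R.

Lemma elimE n (x s : vec n) :
  eliminates (toE x) s = meet x s && (compat x s 1 || compat x s (-1)).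
Proof.
rewrite /eliminates.
have -> : [forall i, (toE x i == None) ==> (coord s i == 0)] by apply/forallP.
have -> : [exists i, (toE x i != Some 0) && (coord s i != 0)] = meet x s.
  by apply: eq_existsb => i; rewrite /toE eqSome.
rewrite andbT; congr (_ && _).
apply/existsP/orP => [[k H]|[H|H]].
- have Hk : compat x s ((-1) ^+ k).
    apply/forallP => c; have := forallP H c; by rewrite /toE eqSome.
  by clear H; case: k Hk => Hk; [right; rewrite expr1 in Hk | left; rewrite expr0 in Hk].
- exists false; apply/forallP => c; have := forallP H c; by rewrite /toE eqSome expr0.
- exists true; apply/forallP => c; have := forallP H c; by rewrite /toE eqSome expr1.
Qed.

Lemma notboth n (x s : vec n) : meet x s -> compat x s 1 -> compat x s (-1) -> False.
Proof.
move/existsP=> [c /andP[Hx Hs]] /forallP/(_ c) H1 /forallP/(_ c) H2.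
rewrite Hs Hx /= in H1 H2; move/eqP: H1; move/eqP: H2; move/eqP: Hs => Hs.
rewrite mul1r mulN1r => H2 H1; lia.
Qed.

Lemma row n (x s : vec n) : \sum_b g x s b = ((eliminates (toE x) s) : nat)%:R.
Proof.
rewrite sumI3 /g ent0 ent1 ent2 elimE eqxx oppr_eq0 oner_eq0.
case: (boolP (meet x s)) => Hm /=.
  case: (boolP (compat x s 1)) => H1; case: (boolP (compat x s (-1))) => H2 //=.
  by case: (notboth Hm H1 H2).
have Hc : forall e, compat x s e.
  move=> e; apply/forallP => c; apply/implyP => /andP [hs hx].
  by move/existsPn: Hm => /(_ c); rewrite hs hx.
by rewrite !Hc; rewrite mulr1 -addrA.
Qed.

Definition condA n m (X : 'I_m -> vec n) (al : vec m) (s : vec n) :=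
  [forall i, if ent (al i) == 0 then ~~ meet (X i) s else compat (X i) s (ent (al i))].

Lemma prod_g n m (X : 'I_m -> vec n) (al : vec m) (s : vec n) :
  \prod_i g (X i) s (al i) = (-2) ^+ zcnt al * ((condA X al s) : nat)%:R.
Proof.
rewrite -prod_zcnt /condA -(prod_ind (fun i => if ent (al i) == 0 then ~~ meet (X i) s
   else compat (X i) s (ent (al i)))) -big_split /=.
by apply: eq_bigr => i _; rewrite /g; case: ifP => _; rewrite ?mul1r.
Qed.

Lemma prodE n m (X : 'I_m -> vec n) s :
  \prod_i (((eliminates (toE (X i)) s) : nat)%:R : int) =
  \sum_(al : vec m) (-2) ^+ zcnt al * ((condA X al s) : nat)%:R.
Proof.
rewrite -(eq_bigr _ (fun i _ => row (X i) s)) bigA_distr_bigA.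
by apply: eq_bigr => al _; apply: prod_g.
Qed.

Definition colok n m (X : 'I_m -> vec n) (al : vec m) (c : 'I_n) (e : int) :=
  [forall i, if ent (al i) == 0 then (e != 0) ==> (coord (X i) c == 0)
     else ((e != 0) && (coord (X i) c != 0)) ==> (coord (X i) c == ent (al i) * e)].

Lemma condA_col n m (X : 'I_m -> vec n) (al : vec m) (s : vec n) :
  condA X al s = [forall c, colok X al c (ent (s c))].
Proof.
apply/forallP/forallP => H.
  move=> c; apply/forallP => i; have := H i; case: ifP => _.
    move/existsPn/(_ c) => h; apply/implyP => hs.
    by move: h; rewrite /coord hs andbT negbK.
  by move/forallP/(_ c).
move=> i; case: ifP => Hi.
  apply/existsPn => c; have := forallP (H c) i; rewrite Hi => /implyP h.
  apply/negP => /andP [hx hs]; by rewrite (eqP (h hs)) eqxx in hx.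
by apply/forallP => c; have := forallP (H c) i; rewrite Hi.
Qed.

Lemma colok0 n m (X : 'I_m -> vec n) al c : colok X al c 0.
Proof. by apply/forallP => i; case: ifP. Qed.

Lemma colok_wit n m (X : 'I_m -> vec n) al c (k : bool) : colok X al c ((-1) ^+ k) ->
  forall i, coord (X i) c ==
     (-1) ^+ k * (((coord (X i) c != 0) : nat)%:R * coord al i).
Proof.
move=> H i; have := forallP H i; rewrite signr_eq0 /= /coord; case: ifP => Ha.
  by move/eqP => ->; rewrite (eqP Ha) !mulr0.
case: (boolP (ent (X i c) != 0)) => hx /=.
  by move/eqP => ->; rewrite mul1r mulrC.
by move: hx; rewrite negbK => /eqP ->; rewrite mul0r mulr0.
Qed.

Lemma BSp_col n m (X : 'I_m -> vec n) al c :
  [exists i, coord (X i) c != 0] ->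
  (c \in BSp X al) = colok X al c 1 || colok X al c (-1).
Proof.
move=> Hnz; rewrite inE Hnz /=; apply/existsP/orP.
  move=> [a /andP [_ /existsP [k /forallP H]]].
  have Hk : colok X al c ((-1) ^+ k).
    apply/forallP => i; have /eqP Hi := H i; rewrite /coord in Hi *; case: ifP => Ha.
      by apply/implyP => _; rewrite Hi (eqP Ha) !mulr0.
    apply/implyP => /andP [_ hx]; rewrite Hi in hx *.
    by case: (a i) hx => /= hx; [rewrite mul1r mulrC | rewrite mul0r mulr0 eqxx in hx].
  by clear H; case: k Hk => Hk; [right; rewrite expr1 in Hk | left; rewrite expr0 in Hk].
have wit : forall k : bool, colok X al c ((-1) ^+ k) -> exists a : {ffun 'I_m -> bool},
   [exists i, a i] && [exists k : bool, forall i,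
       coord (X i) c == (-1) ^+ k * ((nat_of_bool (a i))%:R * coord al i)].
  move=> k H; exists [ffun i => coord (X i) c != 0]; apply/andP; split.
    by move/existsP: Hnz => [i hi]; apply/existsP; exists i; rewrite ffunE.
  apply/existsP; exists k; apply/forallP => i; rewrite ffunE; exact: colok_wit.
by case => H; [apply: (wit false); rewrite expr0 | apply: (wit true); rewrite expr1].
Qed.

Lemma col_count n m (X : 'I_m -> vec n) al c :
  \sum_(x : 'I_3) ((colok X al c (ent x) : nat)%:R : int) =
  (if c \in [set c : 'I_n | [forall i, coord (X i) c == 0]] then 3 else 1) *
  (if c \in BSp X al then 2 else 1).
Proof.
rewrite sumI3 ent0 ent1 ent2 colok0 inE.
case: (boolP [forall i, coord (X i) c == 0]) => Hz.
  have Hc : forall e, colok X al c e.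
    move=> e; apply/forallP => i; rewrite (eqP (forallP Hz i)) eqxx /=.
    by case: ifP => _; rewrite ?implybT ?andbF.
  have -> : c \in BSp X al = false.
    by rewrite inE; apply/negbTE; rewrite negb_and -negb_forall negbK Hz.
  by rewrite !Hc.
have Hnz : [exists i, coord (X i) c != 0] by rewrite -negb_forall.
rewrite (BSp_col _ Hnz) mul1r.
have nb : ~~ (colok X al c 1 && colok X al c (-1)).
  apply/negP => /andP [H1 H2]; move/existsP: Hnz => [i hi].
  have := forallP H1 i; have := forallP H2 i; rewrite oner_eq0 oppr_eq0 oner_eq0 hi /=.
  case: ifP => Ha /eqP h2 /eqP h1.
    by rewrite h1 eqxx in hi.
  move/negbT/eqP: Ha => Ha; rewrite mulr1 in h1; rewrite mulrN1 in h2; lia.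
by move: nb; case: (colok X al c 1); case: (colok X al c (-1)).
Qed.

Lemma sum_cond n m (X : 'I_m -> vec n) al :
  \sum_(s : vec n) ((condA X al s : nat)%:R : int) = 3 ^+ zX X * 2 ^+ #|BSp X al|.
Proof.
have -> : \sum_(s : vec n) ((condA X al s : nat)%:R : int) =
   \prod_c \sum_(x : 'I_3) ((colok X al c (ent x) : nat)%:R : int).
  rewrite bigA_distr_bigA; apply: eq_bigr => s _.
  by rewrite condA_col -(prod_ind (fun c => colok X al c (ent (s c)))).
rewrite (eq_bigr _ (fun c _ => col_count X al c)) big_split /= !prod_if.
by [].
Qed.

Lemma zcnt_neg p (al : vec p) : zcnt (negv al) = zcnt al.
Proof. by rewrite /zcnt; apply: eq_card => i; rewrite !inE coord_neg oppr_eq0. Qed.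

Lemma BSp_neg1 n m (X : 'I_m -> vec n) al c : c \in BSp X al -> c \in BSp X (negv al).
Proof.
rewrite !inE => /andP [h1 /existsP [a /andP [ha /existsP [k /forallP H]]]].
rewrite h1 /=; apply/existsP; exists a; rewrite ha /=; apply/existsP; exists (~~ k).
apply/forallP => i; rewrite coord_neg; apply/eqP; rewrite (eqP (H i)).
by case: k {H} => /=; rewrite ?expr0 ?expr1; ring.
Qed.

Lemma BSp_neg n m (X : 'I_m -> vec n) al : BSp X (negv al) = BSp X al.
Proof.
apply/setP => c; apply/idP/idP; last exact: BSp_neg1.
by move/BSp_neg1; rewrite negvK.
Qed.

Lemma meet_neg n (x s : vec n) : meet x (negv s) = meet x s.
Proof. by apply: eq_existsb => c; rewrite coord_neg oppr_eq0. Qed.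

Lemma compat_neg n (x s : vec n) e : compat x (negv s) e = compat x s (- e).
Proof. by apply: eq_forallb => c; rewrite coord_neg oppr_eq0 mulrN mulNr. Qed.

Lemma condA_neg n m (X : 'I_m -> vec n) al s : condA X al (negv s) = condA X (negv al) s.
Proof.
apply: eq_forallb => i; rewrite ffunE ent_neg oppr_eq0 meet_neg compat_neg.
by case: ifP.
Qed.

Lemma condA_zero n m (X : 'I_m -> vec n) al : condA X al (zerov n) = true.
Proof.
apply/forallP => i; case: ifP => _.
  by apply/existsPn => c; rewrite /coord ffunE /= andbF.
by apply/forallP => c; rewrite /coord ffunE.
Qed.

Lemma sum_z m : (0 < m)%N -> \sum_(al : vec m) (-2 : int) ^+ zcnt al = 0.
Proof.
move=> hm; rewrite (eq_bigr (fun al : vec m => \prod_i (if ent (al i) == 0 then -2 else 1 : int)));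
  last by move=> al _; rewrite prod_zcnt.
rewrite -(bigA_distr_bigA (fun (i : 'I_m) (b : 'I_3) => if ent b == 0 then -2 else 1 : int)).
rewrite (eq_bigr (fun _ => 0)); last by move=> i _; rewrite sumI3 ent0 ent1 ent2 eqxx /=.
by rewrite prodr_const expr0n card_ord; case: m hm.
Qed.

Lemma BSp_zero n m (X : 'I_m -> vec n) : BSp X (zerov m) = set0.
Proof.
apply/setP => c; rewrite !inE; apply/negbTE; apply/negP.
move=> /andP [/existsP [i hi] /existsP [a /andP [_ /existsP [k /forallP H]]]].
have := H i; rewrite /coord ffunE /= mulr0 mulr0 => /eqP h.
by move: hi; rewrite /coord h eqxx.
Qed.

Lemma zcnt_zero m : zcnt (zerov m) = m.
Proof.
rewrite /zcnt (_ : [set i | coord (zerov m) i == 0] = setT) ?cardsT ?card_ord //.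
by apply/setP => i; rewrite !inE /coord ffunE.
Qed.

Lemma mem_cap n m (X : 'I_m -> vec n) s : (0 < m)%N ->
  (s \in \bigcap_(i < m) Elim [set X i]) =
  (s \in Sn n) && [forall i, eliminates (toE (X i)) s].
Proof.
move=> hm; apply/bigcapP/andP.
  move=> H; split.
    by have := H (Ordinal hm) isT; rewrite inE => /andP [].
  apply/forallP => i; have := H i isT; rewrite inE => /andP [_ /existsP [x /andP [hx he]]].
  by move: hx he; rewrite inE => /eqP ->.
move=> [hs /forallP H] i _; rewrite inE hs /=; apply/existsP; exists (X i).
by rewrite set11 H.
Qed.

Theorem mainTheorem12 (n m : nat) (X : 'I_m -> vec n) :
  (0 < m)%N -> injective X -> (forall i, X i \in Sn n) ->
  (#|\bigcap_(i < m) Elim [set X i]|%:Z : int) =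
    3 ^+ zX X * (- (-2) ^+ m.-1 +
      \sum_(al in Sn m) (-1) ^+ zcnt al * 2 ^+ (zcnt al + #|BSp X al|)).
Proof.
move=> hm _ _.
apply: (mulfI (_ : (2:int) != 0)) => //.
pose h := fun s : vec n => \sum_(al : vec m) (-2) ^+ zcnt al * ((condA X al s : nat)%:R : int).
have L1 : (#|\bigcap_(i < m) Elim [set X i]|%:Z : int) = \sum_(s in Sn n) h s.
  rewrite -natz -sum1_card natr_sum big_mkcond [RHS]big_mkcond /=; apply: eq_bigr => s _.
  rewrite mem_cap //; case: (s \in Sn n) => //=; rewrite /h -(prodE X s) prod_ind.
  by case: [forall _, _].
have Hh : forall s, h (negv s) = h s.
  move=> s; rewrite /h [RHS](reindex_inj (inv_inj (@negvK m))) /=.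
  by apply: eq_bigr => al _; rewrite condA_neg zcnt_neg.
have H0 : h (zerov n) = 0.
  rewrite /h (eq_bigr (fun al => (-2) ^+ zcnt al)) ?sum_z // => al _.
  by rewrite condA_zero mulr1.
have L2 : \sum_(s : vec n) h s =
    \sum_(al : vec m) (-2) ^+ zcnt al * (3 ^+ zX X * 2 ^+ #|BSp X al|).
  rewrite /h exchange_big /=; apply: eq_bigr => al _; by rewrite -mulr_sumr sum_cond.
have R1 := @halve m (fun al : vec m => (-2 : int) ^+ zcnt al * 2 ^+ #|BSp X al|).
rewrite /= in R1; rewrite (eq_bigr (fun al : vec m =>
   3 ^+ zX X * ((-2 : int) ^+ zcnt al * 2 ^+ #|BSp X al|))) in L2; last first.
  by move=> al _; rewrite mulrCA.
rewrite -mulr_sumr R1 in L2; last by move=> al; rewrite zcnt_neg BSp_neg.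
rewrite L1.
have := halve Hh; rewrite H0 add0r L2 => <-.
rewrite zcnt_zero BSp_zero cards0 expr0 mulr1.
have -> : \sum_(al in Sn m) (-1) ^+ zcnt al * 2 ^+ (zcnt al + #|BSp X al|) =
          \sum_(al in Sn m) (-2 : int) ^+ zcnt al * 2 ^+ #|BSp X al|.
  by apply: eq_bigr => al _; rewrite exprD mulrA -exprMn mulN1r.
have Em : (-2 : int) ^+ m = -2 * (-2) ^+ m.-1 by rewrite -exprS prednK.
rewrite Em; ring.
Qed.
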